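(* Let $n,k,l$ be nonnegative integers with $k+l\le n$ and let $\alpha,\beta>-1$. For each $i=k+l,k+l+1,\ldots,n$, the modified Jacobi polynomial has the Bernstein representation \[ J_{i,k,l}^{(\alpha,\beta)}(x)=\sum_{h=k}^{n-l}c_{ih}B^n_h(x), \] where \[ c_{ih}=\frac{(\alpha+2l+1)_{i-k-l}}{(i-k-l)!}\binom{n}{h}^{-1}\binom{n-k-l}{h-k}\,Q_{i-k-l}(n-l-h;\,\alpha+2l,\,\beta+2k,\,n-k-l)\qquad(h=k,\ldots,n-l). \]
   Context: Pochhammer symbol: $(a)_0=1$, $(a)_j=a(a+1)\cdots(a+j-1)$. Bernstein polynomials: $B^n_j(x)=\binom nj x^j(1-x)^{n-j}$. Shifted Jacobi polynomials: for $a,b>-1$ and $m\ge0$, $R^{(a,b)}_m(x)=\frac{(a+1)_m}{m!}\sum_{j=0}^m\frac{(-m)_j(m+a+b+1)_j}{j!\,(a+1)_j}(1-x)^j$. Modified Jacobi polynomials: $J_{i,k,l}^{(\alpha,\beta)}(x)=(1-x)^l x^k R^{(\alpha+2l,\beta+2k)}_{i-k-l}(x)$ for $i\ge k+l$. Hahn polynomials: for a nonnegative integer $N$, $a,b>-1$ and $m=0,1,\ldots,N$, $Q_m(x;a,b,N)=\sum_{j=0}^m\frac{(-m)_j(m+a+b+1)_j(-x)_j}{j!\,(a+1)_j\,(-N)_j}$. *)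

(* Defs.v *)
From mathcomp Require Import all_boot all_order all_algebra.
Set Implicit Arguments. Unset Strict Implicit. Unset Printing Implicit Defensive.
Import Order.TTheory GRing.Theory Num.Theory.
Local Open Scope ring_scope.

Definition poch {R : ringType} (a : R) (j : nat) : R :=
  \prod_(i < j) (a + i%:R).

Definition bern {R : ringType} (n j : nat) (x : R) : R :=
  'C(n, j)%:R * x ^+ j * (1 - x) ^+ (n - j).

Definition shJacobi {R : fieldType} (a b : R) (m : nat) (x : R) : R :=
  poch (a + 1) m / (m`!)%:R *
  \sum_(j < m.+1)
     (poch (- m%:R) j * poch (m%:R + a + b + 1) j / ((j`!)%:R * poch (a + 1) j))
     * (1 - x) ^+ j.

(* Modified Jacobi polynomial J_{i,k,l}^{(alpha,beta)}(x) (meaningful for i >= k+l). *)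
Definition modJacobi {R : fieldType} (alpha beta : R) (i k l : nat) (x : R) : R :=
  (1 - x) ^+ l * x ^+ k *
  shJacobi (alpha + 2 * l%:R) (beta + 2 * k%:R) (i - k - l) x.

Definition hahn {R : fieldType} (m : nat) (x a b : R) (N : nat) : R :=
  \sum_(j < m.+1)
     poch (- m%:R) j * poch (m%:R + a + b + 1) j * poch (- x) j
     / ((j`!)%:R * poch (a + 1) j * poch (- N%:R) j).

Definition coefJB {R : fieldType} (alpha beta : R) (n k l i h : nat) : R :=
  poch (alpha + 2 * l%:R + 1) (i - k - l) / ((i - k - l)`!)%:R
  * ('C(n, h)%:R)^-1 * 'C(n - k - l, h - k)%:R
  * hahn (i - k - l) (n - l - h)%:R (alpha + 2 * l%:R) (beta + 2 * k%:R) (n - k - l).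

(* Main.v *)
Require Import Defs.
From mathcomp Require Import all_boot all_order all_algebra.
From mathcomp Require Import zify ring lra.
Import Order.TTheory GRing.Theory Num.Theory.
Local Open Scope ring_scope.

Lemma nat_id N g j : ('C(N, g) * (N - g) ^_ j = 'C(N - j, g) * N ^_ j)%N.
Proof.
have [gN|gN] := leqP g N; last by rewrite !bin_small //; lia.
have [gj|gj] := leqP (g + j) N; last first.
  rewrite ffact_small; last by lia.
  have [jN|jN] := leqP j N.
    by rewrite (@bin_small (N - j) g) ?muln0 ?mul0n //; lia.
  by rewrite (@ffact_small N j) ?muln0 ?mul0n.
apply/eqP; rewrite -(eqn_pmul2r (fact_gt0 g)) -(eqn_pmul2r (fact_gt0 (N - g - j))).
apply/eqP.
have e1 : (N - j - g = N - g - j)%N by lia.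
have h1 := bin_fact gN.
have h2 := ffact_fact (_ : j <= N - g)%N.
have h3 : (g <= N - j)%N by lia.
have h4 := bin_fact h3.
have h5 := ffact_fact (_ : j <= N)%N.
rewrite e1 in h4.
transitivity ('C(N, g) * (g`! * ((N - g) ^_ j * (N - g - j)`!)))%N; first by ring.
rewrite h2; last by lia.
rewrite h1.
transitivity ('C(N - j, g) * (g`! * (N - g - j)`!) * N ^_ j)%N; last by ring.
rewrite h4 mulnC -h5; last by lia.
by congr (_ * _)%N; congr (_ `!); lia.
Qed.

Lemma poch_neg (R : comRingType) (M j : nat) :
  poch (- (M%:R) : R) j = (-1) ^+ j * (M ^_ j)%:R.
Proof.
elim: j => [|j IH]; first by rewrite /poch big_ord0 expr0 mul1r.
rewrite /poch big_ord_recr /= -/(poch _ _) IH ffactnSr natrM exprS.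
have [jM|jM] := leqP j M.
  rewrite natrB //.
  ring.
by rewrite ffact_small // !(mul0r, mulr0).
Qed.

Lemma key (R : realFieldType) N j (x : R) : (j <= N)%N ->
  \sum_(g < N.+1) 'C(N, g)%:R * x ^+ g * (1 - x) ^+ (N - g) *
     (poch (- ((N - g)%:R)) j / poch (- (N%:R)) j) = (1 - x) ^+ j.
Proof.
move=> jN.
have BN : ((N ^_ j)%:R : R) != 0 by rewrite pnatr_eq0 -lt0n ffact_gt0.
have sN : ((-1) ^+ j : R) != 0 by rewrite expf_neq0 // oppr_eq0 oner_eq0.
transitivity (\sum_(g < N.+1) 'C(N - j, g)%:R * x ^+ g * (1 - x) ^+ (N - g) : R).
  apply: eq_bigr => g _; rewrite !poch_neg.
  have e := nat_id N g j.
  have e' : ('C(N, g)%:R * ((N - g) ^_ j)%:R = 'C(N - j, g)%:R * (N ^_ j)%:R :> R)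
    by rewrite -!natrM e.
  have -> : ('C(N - j, g)%:R : R) = 'C(N, g)%:R * ((N - g) ^_ j)%:R / (N ^_ j)%:R
    by rewrite e' mulfK.
  by field; rewrite sN BN.
have -> : (1 - x) ^+ j = (1 - x) ^+ j * ((1 - x) + x) ^+ (N - j) by rewrite subrK expr1n mulr1.
rewrite (exprDn (1 - x) x) big_distrr /=.
have hle : ((N - j).+1 <= N.+1)%N by rewrite ltnS leq_subr.
rewrite (big_ord_widen _ (fun i => (1 - x) ^+ j * ((1 - x) ^+ (N - j - i) * x ^+ i *+ 'C(N - j, i))) hle).
rewrite [in RHS]big_mkcond /=; apply: eq_bigr => g _.
case: ifP => hg.
  rewrite -mulr_natl (_ : N - g = j + (N - j - g))%N ?exprD; first ring.
  lia.
move/negbT: hg; rewrite -leqNgt => hg.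
by rewrite bin_small ?mul0r //; lia.
Qed.

Theorem lemma1 (R : realFieldType) (n k l : nat) (alpha beta : R)
  (hkl : (k + l <= n)%N) (halpha : -1 < alpha) (hbeta : -1 < beta)
  (i : nat) (hi1 : (k + l <= i)%N) (hi2 : (i <= n)%N) (x : R) :
  modJacobi alpha beta i k l x =
  \sum_(k <= h < (n - l).+1) coefJB alpha beta n k l i h * bern n h x.
Proof.
rewrite /modJacobi /shJacobi /coefJB /hahn /bern.
set a := alpha + 2 * l%:R; set b := beta + 2 * k%:R.
set m := (i - k - l)%N; set N := (n - k - l)%N.
have mN : (m <= N)%N by rewrite /m /N; lia.
set P := poch (a + 1) m / (m`!)%:R.
set c := fun j : nat => poch (- m%:R) j * poch (m%:R + a + b + 1) j / ((j`!)%:R * poch (a + 1) j).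
set T := fun g j : nat => 'C(N, g)%:R * x ^+ g * (1 - x) ^+ (N - g) *
     (poch (- ((N - g)%:R)) j / poch (- (N%:R)) j).
transitivity ((1 - x) ^+ l * x ^+ k * P * \sum_(j < m.+1) c j * \sum_(g < N.+1) T g j).
  rewrite -[in RHS]mulrA; congr (_ * (_ * _)); apply: eq_bigr => j _.
  by rewrite /T key //; apply: leq_trans mN; rewrite -ltnS.
rewrite (big_addn 0 _ k) big_mkord.
have -> : ((n - l).+1 - k = N.+1)%N by rewrite /N; lia.
under eq_bigr do rewrite big_distrr.
rewrite big_distrr /=.
under eq_bigr do rewrite big_distrr /=.
rewrite exchange_big /=; apply: eq_bigr => g _.
rewrite [in RHS]mulrAC [in RHS]big_distrr /=; apply: eq_bigr => j _.
rewrite /T /c addnK.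
have gN : (g <= N)%N by rewrite -ltnS.
have e1 : (n - l - (g + k) = N - g)%N by rewrite /N in gN *; lia.
have e2 : (n - (g + k) = (N - g) + l)%N by rewrite /N in gN *; lia.
rewrite e1 e2 !exprD.
have Cn : ('C(n, g + k)%:R : R) != 0.
 rewrite pnatr_eq0 -lt0n bin_gt0. lia.
rewrite !invfM.
set C := ('C(n, g + k)%:R : R).
set D := (j`!%:R : R)^-1. set E := (poch (a + 1) j)^-1. set F := (poch (1 *- N) j)^-1.
rewrite /P. set Q := (m`!%:R : R)^-1.
by field.
Qed.
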